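(* Let $R$ be an associative ring with identity and involution $*$, and let $a\in R^{\#}\cap R^{\dagger}$. Then $a\in R^{SEP}$ if and only if $aa^*a^{\dagger}a^{\dagger}a^2\in PE(R)$.
   Context: An involution on $R$ is a map $x\mapsto x^*$ with $(x^* )^*=x$, $(x+y)^*=x^*+y^*$, $(xy)^*=y^*x^*$. An element $a$ is Moore–Penrose invertible if there is $b$ with $aba=a$, $bab=b$, $(ab)^*=ab$, $(ba)^*=ba$; such $b$ is unique, denoted $a^{\dagger}$, and $R^{\dagger}$ is the set of such $a$. An element $a$ is group invertible if there is $b$ with $aba=a$, $bab=b$, $ab=ba$; such $b$ is unique, denoted $a^{\#}$, and $R^{\#}$ is the set of such $a$. $PE(R)=\{e\in R: e^2=e=e^*\}$ is the set of projections. For $a\in R^{\#}\cap R^{\dagger}$, $a$ is SEP if $a^*=a^{\dagger}=a^{\#}$; $R^{SEP}$ denotes the set of SEP elements. *)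

(* Defs.v *)
From mathcomp Require Import all_boot all_algebra.
Set Implicit Arguments. Unset Strict Implicit. Unset Printing Implicit Defensive.
Import GRing.Theory.
Local Open Scope ring_scope.

Definition is_involution (R : pzRingType) (inv : R -> R) : Prop :=
  [/\ forall x, inv (inv x) = x,
      forall x y, inv (x + y) = inv x + inv y &
      forall x y, inv (x * y) = inv y * inv x].

Definition is_MP_inverse (R : pzRingType) (star : R -> R) (a b : R) : Prop :=
  [/\ a * b * a = a, b * a * b = b,
      star (a * b) = a * b & star (b * a) = b * a].

Definition is_group_inverse (R : pzRingType) (a b : R) : Prop :=
  [/\ a * b * a = a, b * a * b = b & a * b = b * a].

Definition is_projection (R : pzRingType) (star : R -> R) (e : R) : Prop :=
  e * e = e /\ star e = e.

Definition is_SEP (R : pzRingType) (star : R -> R) (a adag asharp : R) : Prop :=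
  star a = adag /\ adag = asharp.

(* Main.v *)
Require Import Defs.
From mathcomp Require Import all_boot all_algebra.
Local Open Scope ring_scope.
Import GRing.Theory.

Theorem theorem2p3 (R : pzRingType) (star : R -> R) (a adag asharp : R) :
  is_involution star ->
  is_MP_inverse star a adag ->
  is_group_inverse a asharp ->
  (is_SEP star a adag asharp <->
   is_projection star (a * star a * adag * adag * (a ^+ 2))).
Proof.
move=> [S1 S2 S3] [M1 M2 M3 M4] [G1 G2 G3].
set s := star in S1 S2 S3 M3 M4 *.
set b := adag in M1 M2 M3 M4 *.
set g := asharp in G1 G2 G3 *.
have M1x x : a * (b * (a * x)) = a * x by rewrite !mulrA M1.
have M2x x : b * (a * (b * x)) = b * x by rewrite !mulrA M2.
have Ga : g * (a * a) = a by rewrite mulrA -G3 G1.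
have Gax x : g * (a * (a * x)) = a * x by rewrite !mulrA -G3 G1.
have aaG : a * (a * g) = a by rewrite G3 mulrA G1.
split.
- move=> [Hsa Hbg].
  have Hbaa : b * (a * a) = a by rewrite Hbg Ga.
  have Hbba : b * (b * a) = b by rewrite Hbg -G3 mulrA G2.
  have He : a * s a * b * b * a ^+ 2 = a * b.
    by rewrite expr2 Hsa -!mulrA Hbaa Hbba.
  rewrite /is_projection He M3; split=> //.
  by rewrite mulrA M1.
- move=> [Hee Hes].
  have sa1 : s a = s a * (a * b) by rewrite -{1}M1 S3 M3.
  have sa2 : s a = b * (a * s a) by rewrite -{1}M1 -mulrA S3 M4 mulrA.
  have sag : s a = s g * (s a * s a) by rewrite -{1}aaG !S3 mulrA.
  have L : forall y, s a * y = 0 -> y = b * (a * y) -> y = 0.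
    move=> y H1 H2.
    rewrite H2 mulrA -M4 S3 -mulrA.
    rewrite sag -!mulrA (mulrA (s a) (s b)) -S3 M4 -mulrA -H2 H1 mulr0.
    done.
  have L2 : forall y, b * y = 0 -> s a * y = 0.
    by move=> y H; rewrite sa1 -!mulrA H !mulr0.
  set e := a * s a * b * b * a ^+ 2 in Hee Hes.
  have pe : a * (b * e) = e by rewrite /e -!mulrA M1x.
  have ep : e * (a * b) = e.
    by rewrite -{1}Hes -{1}M3 -S3 -mulrA pe.
  set v := a * (a * (a * b)) - a * a.
  have Hv : a * (s a * (b * (b * v))) = 0.
    rewrite /v !mulrBr.
    move: ep; rewrite /e expr2 -!mulrA => ->.
    by rewrite subrr.
  have y1 : s a * (b * (b * v)) = 0.
    by rewrite sa2 -!mulrA Hv mulr0.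
  have y1' : b * (b * v) = 0.
    by apply: L => //; rewrite M2x.
  have y2 : b * v = 0.
    by apply: L; [exact: L2 | rewrite M2x].
  have Hv0 : v = 0.
    have -> : v = a * (b * v) by rewrite /v !mulrBr !M1x.
    by rewrite y2 !mulr0.
  have Haab : a * (a * b) = a.
    move/eqP: Hv0; rewrite subr_eq0 => /eqP H.
    by rewrite -(Gax (a*b)) H Ga.
  have Hp : g * a = a * b by rewrite -{1}Haab !mulrA -(mulrA g a a) Ga.
  have P1 : a * b = a * b * (b * a).
    by rewrite -Hp -{1}M1 -mulrA !mulrA.
  have Q1 : b * a = b * a * (a * b).
    by rewrite -Hp -{1}G1 !mulrA.
  have PQ : a * b = b * a.
    by rewrite -M3 P1 S3 M3 M4 -Q1.
  have Hbg : b = g.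
    by rewrite -M2 -mulrA -Hp -G3 mulrA -PQ -Hp G2.
  have He : a * s a * b * b * a ^+ 2 = a * s a.
    rewrite expr2 -!mulrA (mulrA b a a) -PQ M1 -PQ -sa1.
    done.
  move: Hee; rewrite /e He => Hee.
  have H2 : s a * (a * s a) = s a.
    transitivity (b * (a * s a * (a * s a))); last by rewrite Hee -sa2.
    by rewrite -!mulrA (mulrA b a) (mulrA (b * a) (s a)) -(mulrA b a (s a)) -sa2.
  have H3 : a * s a * a = a.
    by move: (congr1 s H2); rewrite !S3 S1.
  have Hpa : a * b = a * s a.
    by rewrite -{1}H3 -!mulrA -sa1.
  split => //.
  by rewrite -M2 -mulrA Hpa -sa2.
Qed.
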